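(* Let $A$ be a dg algebra over a commutative ring $k$ and $x,x'$ Maurer–Cartan elements of $A$. Then $x$ and $x'$ are homotopy gauge equivalent if and only if they are $K_2$-homotopic.
   Context: A Maurer–Cartan element is $x\in A^1$ with $dx+x^2=0$. For such $x$, $A^{[x]}$ is the right dg $A$-module with underlying graded module $A$ and differential $a\mapsto da+xa$; $x,x'$ are homotopy gauge equivalent if $A^{[x]}$ and $A^{[x']}$ are homotopy equivalent right dg $A$-modules, i.e. there are closed degree-0 module maps in both directions whose composites are cohomologous to the identities in the dg Hom complexes. Let $I$ be the singular simplicial set of $[0,1]$. Let $K_2\subset I$ be the simplicial subset generated by the two affine singular 2-simplices $\Delta^2\to[0,1]$ sending the vertices $(x_0,x_1,x_2)$ to $(0,1,0)$ and to $(1,0,1)$ respectively; it has two nondegenerate simplices in each of dimensions 0, 1, 2. $K_2^*$ is its normalized cochain algebra with values in $k$ with the Alexander–Whitney product, and $ev_0,ev_1:K_2^*\to k$ are restriction to the 0-simplices $0$ and $1$. $x,x'$ are $K_2$-homotopic if there is a Maurer–Cartan element $X\in A\otimes K_2^*$ with $(\mathrm{id}_A\otimes ev_0)(X)=x$ and $(\mathrm{id}_A\otimes ev_1)(X)=x'$. *)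

(* Defs.v *)
From HB Require Import structures.
From mathcomp Require Import all_boot all_order all_algebra.
Set Implicit Arguments. Unset Strict Implicit. Unset Printing Implicit Defensive.
Import Order.TTheory GRing.Theory Num.Theory.
Local Open Scope ring_scope.

Record dga (k : comPzRingType) (A : algType k) := DGA {
  hom : int -> A -> Prop;
  dd : A -> A;
  hom0 : forall n, hom n 0;
  homD : forall n a b, hom n a -> hom n b -> hom n (a + b);
  homZ : forall n (c : k) a, hom n a -> hom n (c *: a);
  homM : forall m n a b, hom m a -> hom n b -> hom (m + n) (a * b);
  hom1 : hom 0 1;
  (* A is the direct sum of the A^n *)
  hom_span : forall a : A, exists s : seq (int * A),
      [/\ uniq (unzip1 s), (forall p, p \in s -> hom p.1 p.2)
        & a = \sum_(p <- s) p.2];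
  hom_indep : forall s : seq (int * A), uniq (unzip1 s) ->
      (forall p, p \in s -> hom p.1 p.2) -> \sum_(p <- s) p.2 = 0 ->
      forall p, p \in s -> p.2 = 0;
  ddD : forall a b, dd (a + b) = dd a + dd b;
  ddZ : forall (c : k) a, dd (c *: a) = c *: dd a;
  dd_hom : forall n a, hom n a -> hom (n + 1) (dd a);
  ddM : forall m a b, hom m a ->
      dd (a * b) = dd a * b + (-1) ^+ (absz m) * (a * dd b);
  dd_dd : forall a, dd (dd a) = 0
}.

Section Defs.
Variables (k : comPzRingType) (A : algType k) (D : dga A).

Definition MC (x : A) : Prop := hom D 1 x /\ dd D x + x * x = 0.

(* The differential of the right dg A-module A^[x]: a |-> da + xa. *)
Definition dtw (x : A) (a : A) : A := dd D a + x * a.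

(* Degree-n elements of the dg Hom complex Hom_A(A^[x], A^[x']) of right
   dg A-modules: graded k-linear maps of degree n (the underlying graded
   module of A^[x] is A) that are right A-linear. *)
Definition hom_map (n : int) (f : A -> A) : Prop :=
  [/\ forall a b, f (a + b) = f a + f b,
      forall (c : k) a, f (c *: a) = c *: f a,
      forall a b, f (a * b) = f a * b
    & forall m a, hom D m a -> hom D (m + n) (f a)].

Definition Dhom (x x' : A) (n : int) (f : A -> A) : A -> A :=
  fun a => dtw x' (f a) - (-1) ^+ (absz n) * f (dtw x a).

Definition closed_map (x x' : A) (n : int) (f : A -> A) : Prop :=
  forall a, Dhom x x' n f a = 0.

Definition cohomologous (x x' : A) (f g : A -> A) : Prop :=
  exists h : A -> A, hom_map (-1) h /\
    forall a, f a - g a = Dhom x x' (-1) h a.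

(* x, x' homotopy gauge equivalent: A^[x], A^[x'] homotopy equivalent
   right dg A-modules. *)
Definition homotopy_gauge_equiv (x x' : A) : Prop :=
  exists f g : A -> A,
    [/\ hom_map 0 f /\ closed_map x x' 0 f,
        hom_map 0 g /\ closed_map x' x 0 g,
        cohomologous x x (fun a => g (f a)) id
      & cohomologous x' x' (fun a => f (g a)) id].

(* Every simplex of K_2 is affine with vertices in {0,1} (faces and    *)
(* degeneracies of affine simplices are affine), hence is determined   *)
(* by its vertex sequence, encoded as a [seq bool] (false = 0,         *)
(* true = 1).  The n-simplices of K_2 are exactly the degeneracies of  *)
(* 0, 1, (0,1), (1,0), (0,1,0), (1,0,1), i.e. the vertex sequences of  *)
(* length n+1 with at most two alternations.  Faces delete a vertex,   *)
(* degenerate simplices have two equal consecutive vertices, the       *)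
(* Alexander--Whitney front/back faces are take/drop.                  *)
End Defs.

Fixpoint alternations (s : seq bool) : nat :=
  match s with
  | a :: ((b :: _) as t) => (a != b) + alternations t
  | _ => 0
  end.

Definition K2simplex (s : seq bool) : bool :=
  (0 < size s)%N && (alternations s <= 2)%N.

Definition degenerate (s : seq bool) : bool :=
  has (fun p : bool * bool => p.1 == p.2) (zip s (behead s)).

Definition K2nondeg (s : seq bool) : bool := K2simplex s && ~~ degenerate s.

Definition face (i : nat) (s : seq bool) : seq bool := take i s ++ drop i.+1 s.

Section Tensor.
Variables (k : comPzRingType) (A : algType k) (D : dga A).

(* Since the normalized cochains N^i(K_2; k) are free of finite rank on
   the nondegenerate i-simplices, an element of degree n of A (x) K_2^*
   is the same as a normalized A-valued cochain X: X(s) = 0 for s not a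
   nondegenerate simplex of K_2, and X(s) in A^(n-i) for s a
   nondegenerate i-simplex (sum of a (x) s^* over nondegenerate s). *)
Definition TKelem (n : int) (X : seq bool -> A) : Prop :=
  forall s, (K2nondeg s -> hom D (n - ((size s)%:Z - 1)) (X s)) /\
            (~~ K2nondeg s -> X s = 0).

(* Differential of A (x) K_2^* on a degree-n element:
   d(a (x) phi) = da (x) phi + (-1)^|a| a (x) delta phi, with
   (delta phi)(tau) = sum_l (-1)^l phi(d_l tau). *)
Definition dT (n : int) (X : seq bool -> A) (s : seq bool) : A :=
  dd D (X s) + (-1) ^+ (absz (n - ((size s)%:Z - 2))%R) *
    \sum_(l < size s) (-1) ^+ l * X (face l s).

(* Product of X with Y (Y of degree q):
   (a (x) phi)(b (x) psi) = (-1)^(|phi||b|) ab (x) (phi u psi),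
   (phi u psi)(sigma) = phi(front_i sigma) psi(back_j sigma) (Alexander--Whitney). *)
Definition mulT (q : int) (X Y : seq bool -> A) (s : seq bool) : A :=
  \sum_(i < size s)
    (-1) ^+ (i * absz (q - ((size s)%:Z - 1 - i%:Z))%R) *
      (X (take i.+1 s) * Y (drop i s)).

Definition MC_T (X : seq bool -> A) : Prop :=
  TKelem 1 X /\ forall s, K2nondeg s -> dT 1 X s + mulT 1 X X s = 0.

(* (id (x) ev_0)(X) = X(vertex 0), (id (x) ev_1)(X) = X(vertex 1). *)
Definition K2_homotopic (x x' : A) : Prop :=
  exists X : seq bool -> A,
    [/\ MC_T X, X [:: false] = x & X [:: true] = x'].

End Tensor.

(* Main.v *)
Require Import Defs.
From HB Require Import structures.
From mathcomp Require Import all_boot all_order all_algebra.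
From Stdlib Require Import Setoid FunctionalExtensionality.
Set Implicit Arguments. Unset Strict Implicit. Unset Printing Implicit Defensive.
Import Order.TTheory GRing.Theory Num.Theory.
Local Open Scope ring_scope.

Lemma dd1 (k : comPzRingType) (A : algType k) (D : dga A) : dd D 1 = 0.
Proof.
have := ddM 1 (hom1 D); rewrite !mulr1 expr0 !mul1r.
move=> h; have := congr1 (fun z => z - dd D 1) h.
by rewrite /= subrr addrK => <-.
Qed.

Lemma mulmap_hom (k : comPzRingType) (A : algType k) (D : dga A) n (U : A) :
  Defs.hom D n U -> hom_map D n (fun a => U * a).
Proof.
move=> hU; split.
- by move=> a b; rewrite mulrDr.
- by move=> c a; rewrite scalerAr.
- by move=> a b; rewrite mulrA.
- by move=> m a ha; rewrite addrC; apply: homM.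
Qed.

Lemma Dhom0 (k : comPzRingType) (A : algType k) (D : dga A) (x y U : A) a :
  Defs.hom D 0 U -> Dhom D x y 0 (fun a => U * a) a = (dd D U + y * U - U * x) * a.
Proof.
move=> hU; rewrite /Dhom /dtw (ddM _ hU) /= expr0 !mul1r.
rewrite !mulrDl mulrDr !mulrA ?mulrBl.
rewrite mulNr opprD !addrA; congr (_ + _).
by rewrite addrAC addrK.
Qed.

Lemma Dhomm1 (k : comPzRingType) (A : algType k) (D : dga A) (x y U : A) a :
  Defs.hom D (-1) U -> Dhom D x y (-1) (fun a => U * a) a = (dd D U + y * U + U * x) * a.
Proof.
move=> hU; rewrite /Dhom /dtw (ddM _ hU) /= expr1 !mulN1r opprK.
rewrite !mulrDl mulrDr !mulrA.
by rewrite addrA; congr (_ + _); rewrite addrAC subrK.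
Qed.
Lemma eqv (k : comPzRingType) (A : algType k) (D : dga A) (X : seq bool -> A) a :
  X [::] = 0 ->
  dT D 1 X [:: a] + mulT 1 X X [:: a] = dd D (X [:: a]) + X [:: a] * X [:: a].
Proof.
move=> X0; rewrite /dT /mulT /face /= !big_ord_recr !big_ord0 /= X0.
by rewrite !(expr0, mulr0, add0r, mul1r, addr0).
Qed.

Lemma eqe (k : comPzRingType) (A : algType k) (D : dga A) (X : seq bool -> A) a b :
  dT D 1 X [:: a; b] + mulT 1 X X [:: a; b] =
  dd D (X [:: a; b]) - X [:: b] + X [:: a] + X [:: a] * X [:: a; b] - X [:: a; b] * X [:: b].
Proof.
rewrite /dT /mulT /face /= !big_ord_recr !big_ord0 /=.
rewrite ?addn0 ?subnn ?muln0 ?mul0n ?muln1 ?mul1n !add0r expr0 expr1 !mul1r !mulN1r.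
by rewrite opprD opprK !addrA.
Qed.

Lemma eqt (k : comPzRingType) (A : algType k) (D : dga A) (X : seq bool -> A) a b :
  X [:: a; a] = 0 ->
  dT D 1 X [:: a; b; a] + mulT 1 X X [:: a; b; a] =
  dd D (X [:: a; b; a]) + X [:: b; a] + X [:: a; b] + X [:: a] * X [:: a; b; a]
   + X [:: a; b] * X [:: b; a] + X [:: a; b; a] * X [:: a].
Proof.
move=> Xaa; rewrite /dT /mulT /face /= !big_ord_recr !big_ord0 /= Xaa.
rewrite ?addn0 ?subnn ?muln0 ?mul0n ?muln1 ?mul1n !add0r expr0 expr1 ?sqrrN ?expr1n !mul1r !mulN1r.
by rewrite subr0 !addrA.
Qed.
Lemma K2nondegP s : K2nondeg s ->
  s \in [:: [:: false]; [:: true]; [:: false; true]; [:: true; false];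
            [:: false; true; false]; [:: true; false; true]].
Proof.
case: s => [|[] [|[] [|[] [|[] t]]]] //=; rewrite /K2nondeg /K2simplex /degenerate /= ?andbF //.
Qed.

Lemma ddN (k : comPzRingType) (A : algType k) (D : dga A) (a : A) : dd D (- a) = - dd D a.
Proof.
have h0 : dd D 0 = 0.
  have := ddD D 0 0; rewrite addr0 => h.
  by have := congr1 (fun z => z - dd D 0) h; rewrite /= subrr addrK => <-.
apply/eqP; rewrite -subr_eq0 opprK -ddD addrC subrr h0 //.
Qed.

Lemma edge_iff (k : comPzRingType) (A : algType k) (D : dga A) (U y z : A) :
  (dd D (1 + U) + y * (1 + U) - (1 + U) * z = 0) <->
  (dd D U - z + y + y * U - U * z = 0).
Proof.
rewrite ddD dd1 add0r mulrDr mulr1 mulrDl mul1r opprD !addrA.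
suff -> : dd D U + y + y * U - z = dd D U - z + y + y * U by [].
by rewrite -!addrA; congr (_ + _); rewrite addrA addrC.
Qed.

Lemma subr0P (M : zmodType) (a b : M) : (a = b) <-> (a - b = 0).
Proof. by split=> [->|h]; [exact: subrr | apply/eqP; rewrite -subr_eq0 h]. Qed.

Lemma tri_iff (k : comPzRingType) (A : algType k) (D : dga A) (U1 U2 e y : A) :
  ((1 + U1) * (1 + U2) - 1 = dd D (- e) + y * (- e) + (- e) * y) <->
  (dd D e + U2 + U1 + y * e + U1 * U2 + e * y = 0).
Proof.
rewrite ddN mulrN mulNr mulrDr !mulrDl !mul1r mulr1.
rewrite subr0P !opprD !opprK -[1 + U1 + _]addrA [1 + _]addrC addrK.
suff -> : U1 + (U2 + U1 * U2) + (dd D e + y * e + e * y) =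
  dd D e + U2 + U1 + y * e + U1 * U2 + e * y by [].
rewrite !addrA; congr (_ + _); rewrite [RHS]addrAC; congr (_ + _).
by rewrite [LHS]addrC -!addrA; congr (_ + _); rewrite addrCA.
Qed.

Lemma nondeg_ind (P : seq bool -> Prop) :
  P [:: false] -> P [:: true] -> P [:: false; true] -> P [:: true; false] ->
  P [:: false; true; false] -> P [:: true; false; true] ->
  forall s, K2nondeg s -> P s.
Proof.
move=> h1 h2 h3 h4 h5 h6 s /K2nondegP; rewrite !inE.
by case/orP=> [/eqP->//|]; case/orP=> [/eqP->//|]; case/orP=> [/eqP->//|];
   case/orP=> [/eqP->//|]; case/orP=> [/eqP->//|] /eqP->.
Qed.

Lemma homcast (k : comPzRingType) (A : algType k) (D : dga A) n m (a : A) :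
  n = m -> Defs.hom D n a -> Defs.hom D m a.
Proof. by move=> ->. Qed.

Lemma linE (k : comPzRingType) (A : algType k) (D : dga A) (n : int) (F : A -> A) :
  hom_map D n F -> F = (fun a => F 1 * a).
Proof. by case=> _ _ FM _; apply: functional_extensionality => a; rewrite -FM mul1r. Qed.

Lemma degE (k : comPzRingType) (A : algType k) (D : dga A) (n : int) (F : A -> A) :
  hom_map D n F -> Defs.hom D n (F 1).
Proof. by case=> _ _ _ Fd; rewrite -[n]add0r; apply: Fd (hom1 D). Qed.

Unset Implicit Arguments.
Theorem lemma5p5 (k : comPzRingType) (A : algType k) (D : dga A) (x x' : A) :
  MC D x -> MC D x' ->
  (homotopy_gauge_equiv D x x' <-> K2_homotopic D x x').
Proof.
move=> [hx mx] [hx' mx']; split.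
- case=> f [g [[fh fc] [gh gc] [h1 [h1h h1e]] [h2 [h2h h2e]]]].
  have hW := degE fh; have hV := degE gh.
  have hT := degE h1h; have hT' := degE h2h.
  move: fc gc h1e h2e; rewrite (linE fh) (linE gh) (linE h1h) (linE h2h).
  set W := f 1; set V := g 1; set T := h1 1; set T' := h2 1.
  move=> fc gc h1e h2e.
  have {fc} fc := fc 1; rewrite Dhom0 // mulr1 in fc.
  have {gc} gc := gc 1; rewrite Dhom0 // mulr1 in gc.
  have {h1e} h1e := h1e 1; rewrite Dhomm1 // !mulr1 /= in h1e.
  have {h2e} h2e := h2e 1; rewrite Dhomm1 // !mulr1 /= in h2e.
  pose X : seq bool -> A := fun s => match s with
    | [:: false] => x | [:: true] => x' | [:: false; true] => V - 1
    | [:: true; false] => W - 1 | [:: false; true; false] => - T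
    | [:: true; false; true] => - T' | _ => 0 end.
  exists X; split => //; split.
  { move=> s; case: s => [|[] [|[] [|[] [|[] t]]]]; split => H //.
    all: rewrite /X /=; try exact: hom0.
    all: try (apply: (@homcast _ _ D 0); [by [] | apply: homD => //;
              rewrite -scaleN1r; apply: homZ; exact: hom1]).
    all: apply: (@homcast _ _ D (-1)); [by [] | rewrite -scaleN1r; exact: homZ]. }
  apply: nondeg_ind.
  + by rewrite eqv.
  + by rewrite eqv.
  + rewrite eqe /=; have := proj1 (edge_iff D (V - 1) x x'); rewrite [1 + _]addrC subrK; exact.
  + rewrite eqe /=; have := proj1 (edge_iff D (W - 1) x' x); rewrite [1 + _]addrC subrK; exact.
  + rewrite eqt //=; have := proj1 (tri_iff D (V - 1) (W - 1) (- T) x).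
    by rewrite ![1 + _]addrC !subrK opprK; apply.
  + rewrite eqt //=; have := proj1 (tri_iff D (W - 1) (V - 1) (- T') x').
    by rewrite ![1 + _]addrC !subrK opprK; apply.
- case=> X [[TK EQ] X0 X1].
  have Xn : X [::] = 0 by apply: (TK [::]).2.
  have Xff : X [:: false; false] = 0 by apply: (TK _).2.
  have Xtt : X [:: true; true] = 0 by apply: (TK _).2.
  have h01 : Defs.hom D 0 (1 + X [:: false; true]).
    by apply: homD (hom1 D) _; apply: (homcast _ ((TK [:: false; true]).1 isT)).
  have h10 : Defs.hom D 0 (1 + X [:: true; false]).
    by apply: homD (hom1 D) _; apply: (homcast _ ((TK [:: true; false]).1 isT)).
  have h010 : Defs.hom D (-1) (- X [:: false; true; false]).
    by rewrite -scaleN1r; apply: homZ; apply: (homcast _ ((TK [:: false; true; false]).1 isT)).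
  have h101 : Defs.hom D (-1) (- X [:: true; false; true]).
    by rewrite -scaleN1r; apply: homZ; apply: (homcast _ ((TK [:: true; false; true]).1 isT)).
  have e01 := EQ [:: false; true] isT; rewrite eqe X0 X1 in e01.
  have e10 := EQ [:: true; false] isT; rewrite eqe X0 X1 in e10.
  have e010 := EQ [:: false; true; false] isT; rewrite eqt // X0 in e010.
  have e101 := EQ [:: true; false; true] isT; rewrite eqt // X1 in e101.
  exists (fun a => (1 + X [:: true; false]) * a), (fun a => (1 + X [:: false; true]) * a).
  split.
  + split; first exact: mulmap_hom.
    by move=> a; rewrite Dhom0 // (proj2 (edge_iff _ _ _ _) e10) mul0r.
  + split; first exact: mulmap_hom.
    by move=> a; rewrite Dhom0 // (proj2 (edge_iff _ _ _ _) e01) mul0r.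
  + exists (fun a => (- X [:: false; true; false]) * a); split; first exact: mulmap_hom.
    move=> a; rewrite Dhomm1 // -(proj2 (tri_iff _ _ _ _ _) e010).
    by rewrite mulrBl mul1r mulrA.
  + exists (fun a => (- X [:: true; false; true]) * a); split; first exact: mulmap_hom.
    move=> a; rewrite Dhomm1 // -(proj2 (tri_iff _ _ _ _ _) e101).
    by rewrite mulrBl mul1r mulrA.
Qed.
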